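(* Let $\mathcal{C}=\mathsf{CSS}(A,B)$ be a non-splitting CSS code on $n$ qubits, and let $U$ be a unitary that is $1$-local-Clifford partially addressable on $\mathcal{C}$. Then any $1$-local Clifford circuit that realizes this partial addressing of $U$, written in the normal form $V\cdot Q$ (with $V=\bigotimes_i V_i$, each $V_i\in\{I,P,HP,PH,PHP,H\}$, and $Q$ a Pauli circuit), contains no $H$, $PH$, or $HP$ gates, i.e. $V_i\notin\{H,PH,HP\}$ for all $i$.
   Context: A CSS code $\mathsf{CSS}(A,B)$ on $n$ qubits is given by subspaces $A,B\subseteq\mathbb{F}_2^n$ with $a\cdot b=0$ for all $a\in A,b\in B$; its codespace is the common $+1$-eigenspace of all $X^a$ ($a\in A$) and $Z^b$ ($b\in B$), where for $a\in\mathbb{F}_2^n$ and a single-qubit gate $G$, $G^a=\bigotimes_{i:a_i=1}G_i$. A logical operator is a unitary preserving the codespace. For $a\in\mathbb{F}_2^n$ and $h\subseteq\{1,\dots,n\}$, $a\cap h$ is the vector with $(a\cap h)_i=1$ iff $a_i=1$ and $i\in h$. A subspace $A$ splits on a non-empty $h\subsetneq\{1,\dots,n\}$ if $A=A_1\oplus A_2$ where $A_1$ has support $h$ and $A_2$ is supported on the complement of $h$; the code splits on $h$ if both $A$ and $B$ split on $h$; it is non-splitting if it splits on no such $h$. $P=\mathrm{diag}(1,i)$ is the phase gate and $H$ the Hadamard gate. A $1$-local Clifford circuit is a tensor product of single-qubit Clifford gates; every such circuit equals, up to global phase, $V\cdot Q$ with $Q$ a Pauli circuit and $V$ a tensor product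 of gates from $\{I,P,HP,PH,PHP,H\}$. Fix a choice of logical Pauli operators $\bar X_j,\bar Z_j$ ($j=1,\dots,k$) for the $k$ logical qubits. A logical operator $G$ has logical action $\bar W$, for a $k$-qubit unitary $W=\sum_j\alpha_jW_j$ expanded in Paulis $W_j$, if $G|\psi\rangle=\sum_j\alpha_j\bar W_j|\psi\rangle$ for all codestates, where $\bar W_j$ is the corresponding product of the fixed logical Paulis. For a $p$-qubit unitary $U$ and a family $\mathcal{F}$ of circuits, $U$ is $\mathcal{F}$-partially addressable on $\mathcal{C}$ if there exist a set $I$ of pairwise disjoint ordered $p$-tuples of logical qubits with $I\neq\emptyset$ and $I$ not covering all logical qubits, and a logical operator in $\mathcal{F}$ whose logical action is $\bar U$ applied to each tuple of $I$ (and the identity on the remaining logical qubits). Here $\mathcal{F}$ is the family of $1$-local Clifford circuits. *)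

(* Defs.v *)
From HB Require Import structures.
From mathcomp Require Import all_boot all_order all_algebra.
From mathcomp Require Import complex.
From mathcomp Require Import reals.
Set Implicit Arguments.
Unset Strict Implicit.
Unset Printing Implicit Defensive.
Import GRing.Theory Num.Theory.
Local Open Scope ring_scope.

(** vectors of F_2^n; the i-th coordinate of a is  a 0 i  *)
Notation bits n := 'rV['F_2]_n.

Definition supported_on n (a : bits n) (h : {set 'I_n}) : Prop :=
  forall i : 'I_n, a 0 i != 0 -> i \in h.

Definition dot2 n (a b : bits n) : 'F_2 := \sum_(i < n) a 0 i * b 0 i.

(** CSS(A,B) is well defined: a . b = 0 for all a in A, b in B *)
Definition css_orthogonal n (A B : {vspace bits n}) : Prop :=
  forall a b, a \in A -> b \in B -> dot2 a b = 0.

Definition splits_on n (A : {vspace bits n}) (h : {set 'I_n}) : Prop :=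
  exists A1 A2 : {vspace bits n},
    (A1 + A2)%VS = A /\ (A1 :&: A2)%VS = 0%VS /\
    (forall a, a \in A1 -> supported_on a h) /\
    (forall a, a \in A2 -> supported_on a (~: h)).

Definition code_splits_on n (A B : {vspace bits n}) (h : {set 'I_n}) : Prop :=
  splits_on A h /\ splits_on B h.

Definition non_splitting n (A B : {vspace bits n}) : Prop :=
  forall h : {set 'I_n}, h != set0 -> h != setT -> ~ code_splits_on A B h.

Section Quantum.
Variable C : numClosedFieldType.

(** a state of n qubits: amplitude of each computational basis vector |x> *)
Definition state n := bits n -> C.
Definition op n := state n -> state n.

Definition ofbit (x : 'F_2) : 'I_2 := inord (x : nat).

(** the tensor product  (x)_i g_i  of single-qubit gates g_i (2x2 matrices
    in the computational basis |0>,|1>) acting on n qubits *)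
Definition tensor n (g : 'I_n -> 'M[C]_2) : op n :=
  fun psi x => \sum_(y : bits n)
      (\prod_(i < n) g i (ofbit (x 0 i)) (ofbit (y 0 i))) * psi y.

Definition gpow n (G : 'M[C]_2) (a : bits n) : op n :=
  tensor (fun i => if a 0 i == 1 then G else 1%:M).

Definition Xg : 'M[C]_2 := \matrix_(i, j) (if i == j then 0 else 1).
Definition Zg : 'M[C]_2 := \matrix_(i, j) (if i == j then (-1) ^+ i else 0).
Definition Yg : 'M[C]_2 := 'i *: (Xg *m Zg).   (* = [[0,-i],[i,0]] *)
Definition Pg : 'M[C]_2 := \matrix_(i, j) (if i == j then 'i ^+ i else 0).
Definition Hg : 'M[C]_2 := (sqrtC 2)^-1 *: \matrix_(i, j) ((-1) ^+ (i * j)).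

Definition adj2 (g : 'M[C]_2) : 'M[C]_2 := (map_mx Num.conj g)^T.

Definition clifford1 (g : 'M[C]_2) : Prop :=
  adj2 g *m g = 1%:M /\
  forall s, s \in [:: Xg; Zg] ->
    exists (c : C) (t : 'M[C]_2), t \in [:: Xg; Yg; Zg] /\
      g *m s *m adj2 g = c *: t.

Definition one_local_clifford n (G : op n) : Prop :=
  exists g : 'I_n -> 'M[C]_2, (forall i, clifford1 (g i)) /\
    forall psi x, G psi x = tensor g psi x.

Inductive vgate := gI | gP | gHP | gPH | gPHP | gH.
Inductive pauli1 := pI | pX | pY | pZ.

Definition vgate_mx (v : vgate) : 'M[C]_2 :=
  match v with
  | gI => 1%:M | gP => Pg | gHP => Hg *m Pg | gPH => Pg *m Hg
  | gPHP => Pg *m Hg *m Pg | gH => Hg end.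

Definition pauli1_mx (q : pauli1) : 'M[C]_2 :=
  match q with pI => 1%:M | pX => Xg | pY => Yg | pZ => Zg end.

Definition nf_circuit n (c : C) (V : 'I_n -> vgate) (Q : 'I_n -> pauli1)
  : op n :=
  fun psi x => c * tensor (fun i => vgate_mx (V i))
                          (tensor (fun i => pauli1_mx (Q i)) psi) x.

Definition codestate n (A B : {vspace bits n}) (psi : state n) : Prop :=
  (forall a, a \in A -> forall x, gpow Xg a psi x = psi x) /\
  (forall b, b \in B -> forall x, gpow Zg b psi x = psi x).

Definition inner n (psi phi : state n) : C :=
  \sum_(x : bits n) (psi x)^* * phi x.

Definition logical_operator n (A B : {vspace bits n}) (G : op n) : Prop :=
  (forall psi phi, inner (G psi) (G phi) = inner psi phi) /\
  (forall psi, codestate A B psi -> codestate A B (G psi)).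

Record pauli_data n := PauliData { pc : C; pu : bits n; pv : bits n }.

Definition pauli_op n (P : pauli_data n) : op n :=
  fun psi x => pc P * gpow Xg (pu P) (gpow Zg (pv P) psi) x.

Definition valid_logicals n k (A B : {vspace bits n})
    (LX LZ : 'I_k -> pauli_data n) : Prop :=
  let X j := pauli_op (LX j) in
  let Z j := pauli_op (LZ j) in
  (forall j, pc (LX j) ^+ 4 = 1 /\ pc (LZ j) ^+ 4 = 1) /\
  (forall j, logical_operator A B (X j) /\ logical_operator A B (Z j)) /\
  (forall j psi x, X j (X j psi) x = psi x /\ Z j (Z j psi) x = psi x) /\
  (forall j psi x, X j (Z j psi) x = - Z j (X j psi) x) /\
  (forall j l, j != l -> forall psi x,
      X j (X l psi) x = X l (X j psi) x /\
      Z j (Z l psi) x = Z l (Z j psi) x /\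
      X j (Z l psi) x = Z l (X j psi) x).

Definition lbar_pow n k (L : 'I_k -> pauli_data n) (s : bits k) : op n :=
  fun psi => foldr (fun j phi => if s 0 j == 1 then pauli_op (L j) phi else phi)
                   psi (enum 'I_k).

Definition has_logical_action n k (A B : {vspace bits n})
    (LX LZ : 'I_k -> pauli_data n) (G : op n) (W : op k) : Prop :=
  exists alpha : bits k -> bits k -> C,
    (forall phi y, W phi y =
        \sum_(s : bits k) \sum_(t : bits k) alpha s t * gpow Xg s (gpow Zg t phi) y)
    /\
    (forall psi, codestate A B psi -> forall x, G psi x =
        \sum_(s : bits k) \sum_(t : bits k)
            alpha s t * lbar_pow LX s (lbar_pow LZ t psi) x).

(** a p-qubit operator given by its matrix in the computational basis,
    indexed by bit strings (bit l = qubit l) *)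
Definition unitary_ker p (U : bits p -> bits p -> C) : Prop :=
  forall x z, \sum_(y : bits p) (U y x)^* * U y z = (x == z)%:R.

Definition restrict k p (x : bits k) (tau : p.-tuple 'I_k) : bits p :=
  \row_(l < p) x 0 (tnth tau l).

Definition covered k p (I : {set p.-tuple 'I_k}) (j : 'I_k) : bool :=
  [exists tau in I, j \in tau].

Definition valid_tuples k p (I : {set p.-tuple 'I_k}) : Prop :=
  (forall tau, tau \in I -> uniq tau) /\
  (forall tau sigma, tau \in I -> sigma \in I -> tau != sigma ->
     forall j, j \in tau -> j \notin sigma) /\
  I != set0 /\
  (exists j, ~~ covered I j).

Definition addressed_op k p (U : bits p -> bits p -> C)
    (I : {set p.-tuple 'I_k}) : op k :=
  fun phi x => \sum_(y : bits k)
     ((\prod_(tau in I) U (restrict x tau) (restrict y tau)) *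
      (\prod_(j < k | ~~ covered I j) (x 0 j == y 0 j)%:R)) * phi y.

Definition realizes_addressing n k p (A B : {vspace bits n})
    (LX LZ : 'I_k -> pauli_data n) (U : bits p -> bits p -> C)
    (I : {set p.-tuple 'I_k}) (G : op n) : Prop :=
  valid_tuples I /\ logical_operator A B G /\
  has_logical_action A B LX LZ G (addressed_op U I).

Definition partially_addressable n k p (A B : {vspace bits n})
    (LX LZ : 'I_k -> pauli_data n) (U : bits p -> bits p -> C) : Prop :=
  exists (I : {set p.-tuple 'I_k}) (G : op n),
    one_local_clifford G /\ realizes_addressing A B LX LZ U I G.

End Quantum.

(* Main.v *)
Require Import Defs.
From HB Require Import structures.
From mathcomp Require Import all_boot all_order all_algebra.
From mathcomp Require Import complex.
From mathcomp Require Import reals.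
From mathcomp Require Import ring.
From Stdlib Require Import FunctionalExtensionality.
Require Import Defs.
Set Implicit Arguments.
Unset Strict Implicit.
Unset Printing Implicit Defensive.
Import GRing.Theory Num.Theory.
Local Open Scope ring_scope.
Lemma F2c (a : 'F_2) : a = 0 \/ a = 1.
Proof. case: a => [[|[|m]] Hm]; [left|right|]; try exact: val_inj. by []. Qed.

Lemma F2_11 : (1 + 1 : 'F_2) = 0. Proof. exact: val_inj. Qed.
Lemma F2_aa (a : 'F_2) : a + a = 0.
Proof. by case: (F2c a) => ->; [rewrite addr0 | exact: F2_11]. Qed.
Lemma F2_10 : (1 : 'F_2) != 0. Proof. by []. Qed.

Lemma ofbit0 : ofbit 0 = 0. Proof. by apply: val_inj; rewrite /= inordK. Qed.
Lemma ofbit1 : ofbit 1 = 1. Proof. by apply: val_inj; rewrite /= inordK. Qed.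

Section S.
Variable R : realType.
Local Notation C := R[i].

Definition sgn (b : 'F_2) : C := if b == 0 then 1 else -1.
Lemma sgn0 : sgn 0 = 1. Proof. by rewrite /sgn eqxx. Qed.
Lemma sgn1 : sgn 1 = -1. Proof. by []. Qed.
Lemma sgnD a b : sgn (a + b) = sgn a * sgn b.
Proof.
case: (F2c a) => ->; case: (F2c b) => ->;
  rewrite ?addr0 ?add0r ?F2_11 ?sgn0 ?sgn1 ?mul1r ?mulr1 //; ring.
Qed.
Lemma sgnK a : sgn a * sgn a = 1.
Proof. by rewrite -sgnD F2_aa sgn0. Qed.
Lemma sgn_neq0 a : sgn a != 0.
Proof. by case: (F2c a) => ->; rewrite ?sgn0 ?sgn1 ?oppr_eq0 oner_eq0. Qed.
Lemma sgn_eq1 a : sgn a = 1 -> a = 0.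
Proof.
case: (F2c a) => -> //; rewrite sgn1 => /eqP; rewrite -subr_eq0 -opprD oppr_eq0.
by rewrite -mulr2n mulrn_eq0 oner_eq0.
Qed.
Lemma sgn_sum (I : finType) (F : I -> 'F_2) : \prod_i sgn (F i) = sgn (\sum_i F i).
Proof. by rewrite (big_morph sgn sgnD sgn0). Qed.

Definition K (g : 'M[C]_2) (a b : 'F_2) := g (ofbit a) (ofbit b).

Definition pf n (c : C) (u v : bits n) : op C n :=
  fun psi x => c * sgn (dot2 v (x + u)) * psi (x + u).

Lemma tensor_pauli n (g : 'I_n -> 'M[C]_2) (w : 'I_n -> C) (u v : bits n) :
  (forall i a b, K (g i) a b = w i * ((b == a + u 0 i)%:R * sgn (v 0 i * b))) ->
  forall psi x, tensor g psi x = pf (\prod_i w i) u v psi x.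
Proof.
move=> Hg psi x; rewrite /tensor /pf.
rewrite (bigD1 (x + u)) //= [X in _ + X = _]big1 ?addr0; last first.
  move=> y Hy; apply/eqP; rewrite mulf_eq0; apply/orP; left.
  have [i Hi] : exists i, y 0 i != (x + u) 0 i.
    apply/existsP; rewrite -negb_forall; apply: contra Hy => /forallP H.
    by apply/eqP/rowP => i; apply/eqP; rewrite H.
  rewrite mxE in Hi; rewrite (bigD1 i) //= -/(K _ _ _) Hg (negbTE Hi) !mul0r mulr0 mul0r //.
congr (_ * _).
rewrite (eq_bigr (fun i => w i * sgn (v 0 i * (x + u) 0 i))); last first.
  by move=> i _; rewrite -/(K _ _ _) Hg mxE eqxx mul1r.
by rewrite big_split /= sgn_sum.
Qed.

End S.
Section S1.
Variable R : realType.
Local Notation C := R[i].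
Local Notation sgn := (@sgn R).
Local Notation K := (@K R).

Ltac f2c a := case: (F2c a) => ->.
Ltac fin := rewrite ?mulr0n ?mulr1n ?mulr0 ?mulr1 ?mul0r ?mul1r ?addr0 ?add0r ?expr0 ?expr1 /=; try done; try ring.
Ltac f2s := rewrite ?add0r ?addr0 ?F2_11 ?mul0r ?mulr0 ?mul1r ?mulr1 ?ofbit0 ?ofbit1 ?sgn0 ?sgn1 /=.

Definition pw (a : 'F_2) : C := if a == 0 then 1 else 'i.
Lemma pw0 : pw 0 = 1. Proof. by []. Qed.
Lemma pw1 : pw 1 = 'i. Proof. by []. Qed.

Definition s2 : C := (sqrtC 2)^-1.

Lemma KI a b : K 1%:M a b = (b == a)%:R.
Proof. rewrite /K; f2c a; f2c b; f2s; rewrite !mxE //. Qed.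

Lemma KX a b : K (Xg C) a b = (b == a + 1)%:R.
Proof. rewrite /K; f2c a; f2c b; f2s; rewrite !mxE //. Qed.

Lemma KZ a b : K (Zg C) a b = (b == a)%:R * sgn b.
Proof. rewrite /K; f2c a; f2c b; f2s; rewrite !mxE /= ?mulr1 ?mul1r ?mulr0 //; ring. Qed.

Lemma KY a b : K (Yg C) a b = 'i * ((b == a + 1)%:R * sgn b).
Proof.
rewrite /K /Yg; f2c a; f2c b; f2s; rewrite !mxE !big_ord_recl big_ord0 !mxE /=;
  rewrite ?mulr1 ?mul1r ?mulr0 ?mul0r ?addr0 ?add0r //; rewrite ?mulr0n ?mulr1n ?mulr0 ?mulr1 //.
Qed.

Lemma KP a b : K (Pg C) a b = (b == a)%:R * pw a.
Proof. rewrite /K; f2c a; f2c b; f2s; rewrite !mxE /=; fin. Qed.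

Lemma KH a b : K (Hg C) a b = s2 * sgn (a * b).
Proof. rewrite /K /Hg /s2; f2c a; f2c b; f2s; rewrite !mxE /=; fin; match goal with |- ?G => idtac G end. Qed.

Lemma Kmul (g h : 'M[C]_2) a b :
  K (g *m h) a b = K g a 0 * K h 0 b + K g a 1 * K h 1 b.
Proof.
have E0 : ofbit 0 = ord0 by apply/val_inj; rewrite /= inordK.
have E1 : ofbit 1 = lift ord0 (ord0 : 'I_1) by apply/val_inj; rewrite /= inordK.
by rewrite /K mxE !big_ord_recl big_ord0 addr0 E0 E1.
Qed.

End S1.
Definition mxx (g : vgate) : 'F_2 :=
  match g with gI => 1 | gP => 1 | gH => 0 | gHP => 0 | gPH => 1 | gPHP => 1 end.
Definition mxz (g : vgate) : 'F_2 :=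
  match g with gI => 0 | gP => 0 | gH => 1 | gHP => 1 | gPH => 1 | gPHP => 1 end.
Definition mzx (g : vgate) : 'F_2 :=
  match g with gI => 0 | gP => 1 | gH => 1 | gHP => 1 | gPH => 1 | gPHP => 0 end.
Definition mzz (g : vgate) : 'F_2 :=
  match g with gI => 1 | gP => 1 | gH => 0 | gHP => 1 | gPH => 0 | gPHP => 1 end.

Section S2.
Variable R : realType.
Local Notation C := R[i].
Local Notation sgn := (@sgn R).
Local Notation K := (@K R).

Ltac f2c a := case: (F2c a) => ->.
Ltac f2s := rewrite ?(add0r, addr0, F2_11, mul0r, mulr0, mul1r, mulr1, ofbit0, ofbit1, sgn0, sgn1, pw0, pw1) /=.

Ltac body Hi := let a := fresh "a" in let b := fresh "b" in intros a b; f2c a; f2c b; rewrite /vgate_mx ?Kmul ?KH ?KP ?KI; f2s; rewrite ?mulr0n ?mulr1n;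
   ring: Hi.



Definition omg (g : vgate) (u1 v1 : 'F_2) : C :=
  if u1 == 0 then (if v1 == 0 then 1 else
     match g with gI => 1 | gP => 1 | gH => 1 | gHP => -'i | gPH => 1 | gPHP => -'i end)
  else (if v1 == 0 then
     match g with gI => 1 | gP => -'i | gH => 1 | gHP => 1 | gPH => 'i | gPHP => 1 end
  else match g with gI => 1 | gP => -'i | gH => -1 | gHP => 'i | gPH => -'i | gPHP => -'i end).

Definition conj_eq (g : vgate) (u1 v1 a b : 'F_2) : Prop :=
  sgn (v1 * (a + u1)) * K (vgate_mx C g) (a + u1) b =
    omg g u1 v1 * (sgn ((mzx g * u1 + mzz g * v1) * b) *
         K (vgate_mx C g) a (b + (mxx g * u1 + mxz g * v1))).
Lemma conj_gI u1 v1 a b : conj_eq gI u1 v1 a b.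
Proof. have Hi := @sqrCi C. rewrite /conj_eq; f2c u1; f2c v1; rewrite /omg /=; f2c a; f2c b; rewrite /vgate_mx ?Kmul ?KH ?KP ?KI; f2s; rewrite ?mulr0n ?mulr1n; ring: Hi. Qed.
Lemma conj_gP u1 v1 a b : conj_eq gP u1 v1 a b.
Proof. have Hi := @sqrCi C. rewrite /conj_eq; f2c u1; f2c v1; rewrite /omg /=; f2c a; f2c b; rewrite /vgate_mx ?Kmul ?KH ?KP ?KI; f2s; rewrite ?mulr0n ?mulr1n; ring: Hi. Qed.
Lemma conj_gH u1 v1 a b : conj_eq gH u1 v1 a b.
Proof. have Hi := @sqrCi C. rewrite /conj_eq; f2c u1; f2c v1; rewrite /omg /=; f2c a; f2c b; rewrite /vgate_mx ?Kmul ?KH ?KP ?KI; f2s; rewrite ?mulr0n ?mulr1n; ring: Hi. Qed.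
Lemma conj_gHP u1 v1 a b : conj_eq gHP u1 v1 a b.
Proof. have Hi := @sqrCi C. rewrite /conj_eq; f2c u1; f2c v1; rewrite /omg /=; f2c a; f2c b; rewrite /vgate_mx ?Kmul ?KH ?KP ?KI; f2s; rewrite ?mulr0n ?mulr1n; ring: Hi. Qed.
Lemma conj_gPH u1 v1 a b : conj_eq gPH u1 v1 a b.
Proof. have Hi := @sqrCi C. rewrite /conj_eq; f2c u1; f2c v1; rewrite /omg /=; f2c a; f2c b; rewrite /vgate_mx ?Kmul ?KH ?KP ?KI; f2s; rewrite ?mulr0n ?mulr1n; ring: Hi. Qed.
Lemma conj_gPHP u1 v1 a b : conj_eq gPHP u1 v1 a b.
Proof. have Hi := @sqrCi C. rewrite /conj_eq; f2c u1; f2c v1; rewrite /omg /=; f2c a; f2c b; rewrite /vgate_mx ?Kmul ?KH ?KP ?KI; f2s; rewrite ?mulr0n ?mulr1n; ring: Hi. Qed.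

Lemma omg_neq0 g u1 v1 : omg g u1 v1 != 0.
Proof.
have Hn : ('i : C) != 0 by rewrite neq0Ci.
have Hn' : (- 'i : C) != 0 by rewrite oppr_eq0.
have H1 : (- 1 : C) != 0 by rewrite oppr_eq0 oner_eq0.
by case: g; f2c u1; f2c v1; rewrite /omg /= ?oner_eq0.
Qed.

Lemma conj1 g u1 v1 a b : conj_eq g u1 v1 a b.
Proof. case: g; [exact: conj_gI|exact: conj_gP|exact: conj_gHP|exact: conj_gPH|exact: conj_gPHP|exact: conj_gH]. Qed.
End S2.
Section S3.
Variable R : realType.
Local Notation C := R[i].
Local Notation sgn := (@sgn R).
Local Notation K := (@K R).
Local Notation pf := (@pf R _).
Variable n : nat.
Variable V : 'I_n -> vgate.

Definition Mx (u v : bits n) : bits n := \row_i (mxx (V i) * u 0 i + mxz (V i) * v 0 i).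
Definition Mz (u v : bits n) : bits n := \row_i (mzx (V i) * u 0 i + mzz (V i) * v 0 i).
Definition gV := fun i => vgate_mx C (V i).

Lemma dot2E (v x : bits n) : sgn (dot2 v x) = \prod_i sgn (v 0 i * x 0 i).
Proof. by rewrite sgn_sum. Qed.

Lemma addKr2 (z u : bits n) : z + u + u = z.
Proof. by apply/rowP => i; rewrite !mxE -addrA F2_aa addr0. Qed.

Lemma conjV c u v psi x :
  pf c u v (tensor gV psi) x =
  tensor gV (pf (c * \prod_i omg R (V i) (u 0 i) (v 0 i)) (Mx u v) (Mz u v) psi) x.
Proof.
rewrite /pf /tensor dot2E -mulrA mulr_sumr.
transitivity (c * \sum_(y : bits n) (\prod_i omg R (V i) (u 0 i) (v 0 i)) *
   (sgn (dot2 (Mz u v) y) * \prod_i K (gV i) (x 0 i) (y 0 i + Mx u v 0 i)) * psi y).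
  congr (_ * _); apply: eq_bigr => y _.
  have E : forall i, sgn (v 0 i * (x + u) 0 i) * gV i (ofbit ((x + u) 0 i)) (ofbit (y 0 i)) =
     omg R (V i) (u 0 i) (v 0 i) * (sgn (Mz u v 0 i * y 0 i) * K (gV i) (x 0 i) (y 0 i + Mx u v 0 i)).
    move=> i; have := conj1 R (V i) (u 0 i) (v 0 i) (x 0 i) (y 0 i); rewrite /conj_eq.
    by rewrite !mxE.
  rewrite [LHS]mulrA -big_split /= (eq_bigr _ (fun i _ => E i)) big_split /= big_split /= -dot2E; ring.
rewrite (reindex_inj (addIr (Mx u v))) /= mulr_sumr.
apply: eq_bigr => z _.
have -> : \prod_i K (gV i) (x 0 i) ((z + Mx u v) 0 i + Mx u v 0 i) = \prod_i K (gV i) (x 0 i) (z 0 i).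
  by apply: eq_bigr => i _; rewrite mxE -addrA F2_aa addr0.
rewrite /K; ring.
Qed.
End S3.
Section S4.
Variable R : realType.
Local Notation C := R[i].
Local Notation sgn := (@sgn R).
Local Notation K := (@K R).
Local Notation pf := (@pf R _).
Variable n : nat.

Lemma dot2C (a b : bits n) : dot2 a b = dot2 b a.
Proof. by apply: eq_bigr => i _; rewrite mulrC. Qed.
Lemma dot2Dr (a b c : bits n) : dot2 a (b + c) = dot2 a b + dot2 a c.
Proof. by rewrite /dot2 -big_split; apply: eq_bigr => i _; rewrite mxE mulrDr. Qed.
Lemma dot2Dl (a b c : bits n) : dot2 (a + b) c = dot2 a c + dot2 b c.
Proof. by rewrite dot2C dot2Dr !(dot2C c). Qed.
Lemma dot20r (a : bits n) : dot2 a 0 = 0.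
Proof. by rewrite /dot2 big1 // => i _; rewrite mxE mulr0. Qed.
Lemma dot20l (a : bits n) : dot2 0 a = 0.
Proof. by rewrite dot2C dot20r. Qed.

Lemma tensor_scale (g : 'I_n -> 'M[C]_2) (s : C) phi x :
  tensor g (fun y => s * phi y) x = s * tensor g phi x.
Proof. by rewrite /tensor mulr_sumr; apply: eq_bigr => y _; ring. Qed.

Lemma tensor_ext (g : 'I_n -> 'M[C]_2) phi phi' :
  (forall y, phi y = phi' y) -> forall x, tensor g phi x = tensor g phi' x.
Proof. by move=> H x; rewrite /tensor; apply: eq_bigr => y _; rewrite H. Qed.

Lemma pf_scale (s c : C) u v (psi : state C n) x : pf (s * c) u v psi x = s * pf c u v psi x.
Proof. by rewrite /pf; ring. Qed.

Lemma pf_lin c u v (s : C) (phi : state C n) x :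
  pf c u v (fun y => s * phi y) x = s * pf c u v phi x.
Proof. by rewrite /pf; ring. Qed.

Lemma pf_ext c u v (phi phi' : state C n) :
  (forall y, phi y = phi' y) -> forall x, pf c u v phi x = pf c u v phi' x.
Proof. by move=> H x; rewrite /pf H. Qed.

Lemma pf_comm c u v d u2 v2 (psi : state C n) x :
  pf c u v (pf d u2 v2 psi) x = sgn (dot2 v u2 + dot2 v2 u) * pf d u2 v2 (pf c u v psi) x.
Proof.
rewrite /pf -!addrA (addrC u u2).
rewrite !dot2Dr !sgnD.
set A1 := sgn (dot2 v x); set A2 := sgn (dot2 v u); set A3 := sgn (dot2 v u2).
set B1 := sgn (dot2 v2 x); set B2 := sgn (dot2 v2 u); set B3 := sgn (dot2 v2 u2).
have H3 : A3 * A3 = 1 by exact: sgnK.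
have H2 : B2 * B2 = 1 by exact: sgnK.
ring: H3 H2.
Qed.

Lemma gpowX (u : bits n) psi x : gpow (Xg C) u psi x = psi (x + u).
Proof.
rewrite /gpow (@tensor_pauli R n _ (fun _ => 1) u 0).
  by rewrite /pf dot20l sgn0 big1 // !mul1r.
move=> i a b; rewrite mxE mul0r sgn0 mulr1 mul1r.
case: (F2c (u 0 i)) => ->; rewrite ?KI ?KX ?addr0 //.
Qed.

Lemma gpowZ (v : bits n) psi x : gpow (Zg C) v psi x = sgn (dot2 v x) * psi x.
Proof.
rewrite /gpow (@tensor_pauli R n _ (fun _ => 1) 0 v).
  by rewrite /pf addr0 big1 // !mul1r.
move=> i a b; rewrite mxE addr0 mul1r.
case: (F2c (v 0 i)) => ->; rewrite ?KI ?KZ ?mul0r ?mul1r ?sgn0 ?mulr1 //.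
Qed.

Lemma pauli_opE (P : pauli_data C n) psi x :
  pauli_op P psi x = pf (pc P) (pu P) (pv P) psi x.
Proof. by rewrite /pauli_op gpowX gpowZ /pf mulrA. Qed.

Definition qw (q : pauli1) : C := if q is pY then 'i else 1.
Definition qu (q : pauli1) : 'F_2 := match q with pI => 0 | pX => 1 | pY => 1 | pZ => 0 end.
Definition qv (q : pauli1) : 'F_2 := match q with pI => 0 | pX => 0 | pY => 1 | pZ => 1 end.

Lemma tensorQ (Q : 'I_n -> pauli1) psi x :
  tensor (fun i => pauli1_mx C (Q i)) psi x =
  pf (\prod_i qw (Q i)) (\row_i qu (Q i)) (\row_i qv (Q i)) psi x.
Proof.
apply: tensor_pauli => i a b; rewrite !mxE.
case: (Q i) => /=; rewrite ?KI ?KX ?KZ ?KY ?mul0r ?mul1r ?sgn0 ?mulr1 ?addr0 //.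
Qed.

Lemma pf_ne0 (c : C) u v (psi : state C n) x : c != 0 -> psi (x + u) != 0 -> pf c u v psi x != 0.
Proof. by move=> Hc Hp; rewrite /pf !mulf_neq0 ?sgn_neq0. Qed.

End S4.

Section S5.
Variable R : realType.
Local Notation C := R[i].
Local Notation sgn := (@sgn R).
Local Notation pf := (@pf R _).
Variable n : nat.
Variable V : 'I_n -> vgate.
Variable Q : 'I_n -> pauli1.
Variable c0 : C.
Local Notation G := (nf_circuit c0 V Q).

Lemma conjG c u v : c != 0 -> exists c2 : C, c2 != 0 /\
  forall psi x, pf c u v (G psi) x = G (pf c2 (Mx V u v) (Mz V u v) psi) x.
Proof.
move=> Hc.
set uq : bits n := \row_i qu (Q i); set vq : bits n := \row_i qv (Q i).
set q := \prod_i qw R (Q i).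
set c' := c * \prod_i omg R (V i) (u 0 i) (v 0 i).
exists (sgn (dot2 (Mz V u v) uq + dot2 vq (Mx V u v)) * c'); split.
  rewrite mulf_neq0 ?sgn_neq0 // mulf_neq0 // prodf_seq_neq0.
  by apply/allP => i _; exact: omg_neq0.
move=> psi x; rewrite /nf_circuit.
rewrite (pf_lin _ _ _ _ (fun y => tensor (gV R V) _ y)) -/(gV R V).
rewrite conjV. congr (_ * _).
apply: tensor_ext => y.
transitivity (pf c' (Mx V u v) (Mz V u v) (pf q uq vq psi) y).
  by apply: pf_ext => z; rewrite tensorQ.
rewrite pf_comm tensorQ -/q -/uq -/vq.
rewrite [RHS](@pf_ext _ _ q uq vq _ (fun z => sgn (dot2 (Mz V u v) uq + dot2 vq (Mx V u v)) *
   pf c' (Mx V u v) (Mz V u v) psi z)); last by move=> z; rewrite pf_scale.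
by rewrite pf_lin.
Qed.
End S5.
Section S6.
Variable R : realType.
Local Notation C := R[i].
Local Notation sgn := (@sgn R).
Local Notation pf := (@pf R _).
Variable n : nat.
Variables A B : {vspace bits n}.
Hypothesis hAB : css_orthogonal A B.

Definition indA : state C n := fun x => (x \in A)%:R.
Definition xiB : state C n := fun x => \sum_(b | b \in B) sgn (dot2 b x).

Lemma indA_code : codestate A B indA.
Proof.
split=> [a Ha x | b Hb x]; rewrite ?gpowX ?gpowZ /indA.
  by rewrite rpredDr.
case Hx: (x \in A); last by rewrite mulr0.
by rewrite dot2C (hAB Hx Hb) sgn0 mul1r.
Qed.

Lemma xiB_X a x : a \in A -> xiB (x + a) = xiB x.
Proof.
move=> Ha; apply: eq_bigr => b Hb.
by rewrite dot2Dr (dot2C b a) (hAB Ha Hb) addr0.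
Qed.

Lemma xiB_code : codestate A B xiB.
Proof.
split=> [a Ha x | b Hb x]; rewrite ?gpowX ?gpowZ.
  exact: xiB_X.
rewrite /xiB mulr_sumr (reindex_inj (addIr b)) /=.
rewrite (eq_bigl (fun j => j \in B)) => [|y]; last by rewrite /= rpredDr.
by apply: eq_bigr => y _; rewrite dot2Dl sgnD mulrCA sgnK mulr1.
Qed.

Definition Nn : C := (#|{: bits n}|)%:R.
Lemma Nn_neq0 : Nn != 0.
Proof. by rewrite /Nn pnatr_eq0 -lt0n; apply/card_gt0P; exists 0. Qed.

Lemma dot2_delta (y : bits n) i : dot2 y (delta_mx 0 i) = y 0 i.
Proof.
rewrite /dot2 (bigD1 i) //= big1 ?addr0 => [|j Hj]; rewrite mxE.
  by rewrite !eqxx /= mulr1.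
by rewrite (negbTE Hj) andbF /= mulr0.
Qed.

Lemma charsum (y : bits n) : \sum_x sgn (dot2 y x) = (y == 0)%:R * Nn.
Proof.
case: eqP => [->|/eqP Hy].
  by rewrite mul1r /Nn -sum1_card natr_sum; apply: eq_bigr => x _; rewrite dot20l sgn0.
rewrite mul0r.
have [i Hi] : exists i, y 0 i != 0.
  apply/existsP; rewrite -negb_forall; apply: contra Hy => /forallP H.
  by apply/eqP/rowP => i; rewrite mxE; apply/eqP; rewrite H.
have Hi1 : y 0 i = 1 by case: (F2c (y 0 i)) Hi => ->.
set S := \sum_x _.
have : S = - S.
  rewrite {1}/S (reindex_inj (addIr (delta_mx 0 i))) /= /S -sumrN.
  by apply: eq_bigr => x _; rewrite dot2Dr dot2_delta Hi1 sgnD sgn1 mulrN1.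
move/eqP; rewrite -subr_eq0 opprK -mulr2n mulrn_eq0 /=.
by move/eqP.
Qed.

Lemma addvv (z : bits n) : z + z = 0.
Proof. by apply/rowP => i; rewrite !mxE F2_aa. Qed.

Lemma F2N (a : 'F_2) : - a = a.
Proof. by case: (F2c a) => ->; [rewrite oppr0 | apply: val_inj]. Qed.

Lemma vN (z : bits n) : - z = z.
Proof. by apply/rowP => i; rewrite !mxE F2N. Qed.

Lemma sum_xi : \sum_y xiB y = Nn.
Proof.
rewrite /xiB exchange_big /= (bigD1 0) ?mem0v //= charsum eqxx mul1r big1 ?addr0 //.
by move=> b /andP [_ Hb]; rewrite charsum (negbTE Hb) mul0r.
Qed.

Lemma sum_xi_sgn (w : bits n) : w \notin B -> \sum_y sgn (dot2 w y) * xiB y = 0.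
Proof.
move=> Hw; rewrite /xiB.
rewrite (eq_bigr (fun y => \sum_(b in B) sgn (dot2 (b + w) y))); last first.
  by move=> y _; rewrite mulr_sumr; apply: eq_bigr => b _; rewrite dot2Dl sgnD mulrC.
rewrite exchange_big /= big1 // => b Hb.
rewrite charsum.
have -> : (b + w == 0) = false.
  apply/negP => /eqP E; move: Hw; have -> : w = b by rewrite -[w]add0r -(addvv b) -addrA E addr0.
  by rewrite Hb.
by rewrite mul0r.
Qed.

Lemma PEQ (c d : C) u v u' v' : c != 0 ->
  (forall psi, codestate A B psi -> forall x, pf c u v psi x = pf d u' v' psi x) ->
  u + u' \in A /\ v + v' \in B.
Proof.
move=> Hc H.
have HA : u + u' \in A.
  have := H _ indA_code u; rewrite /pf /indA addvv mem0v.
  case: (u + u' \in A) => //= E.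
  by move/eqP: E; rewrite /= ?mulr1 ?mulr0 mulf_eq0 (negbTE Hc) (negbTE (sgn_neq0 _ _)).
split=> //.
set d' := d * sgn (dot2 v' (u + u')).
have E' : forall y, c * xiB y = d' * (sgn (dot2 (v + v') y) * xiB y).
  move=> y; have := H _ xiB_code (y + u); rewrite /pf addKr2 -addrA xiB_X // => E.
  have hv : sgn (dot2 v y) * sgn (dot2 v y) = 1 by exact: sgnK.
  transitivity (sgn (dot2 v y) * (c * sgn (dot2 v y) * xiB y)); first by ring: hv.
  rewrite E /d' !dot2Dr dot2Dl !sgnD; ring: hv.
case Hd: (v + v' \in B) => //.
have := f_equal (fun f => \sum_y f y) (functional_extensionality _ _ E') => /=.
rewrite -mulr_sumr -mulr_sumr sum_xi sum_xi_sgn ?Hd // mulr0 => /eqP.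
by rewrite mulf_eq0 (negbTE Hc) (negbTE Nn_neq0).
Qed.

End S6.
Section S7.
Variable n : nat.

Definition maskc (f : 'I_n -> 'F_2) (a : bits n) : bits n := \row_i (f i * a 0 i).
Definition Dm (f : 'I_n -> 'F_2) : 'M['F_2]_n := diag_mx (\row_i f i).
Lemma maskcE f a : a *m Dm f = maskc f a.
Proof. by apply/rowP => i; rewrite /Dm mul_mx_diag !mxE mulrC. Qed.

Lemma F2_1f (x : 'F_2) : (1 + x) * x = 0.
Proof. by case: (F2c x) => ->; rewrite ?mulr0 // mulr1 F2_11. Qed.

Lemma split_of (S : {vspace bits n}) (f : 'I_n -> 'F_2) :
  (forall a, a \in S -> maskc f a \in S) -> splits_on S [set i | f i == 1].
Proof.
move=> Hs.
set f' := fun i => 1 + f i.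
have Hc : forall a, maskc f' a = a - maskc f a.
  move=> a; apply/rowP => i; rewrite !mxE /f' mulrDl mul1r.
  by rewrite F2N.
have L1 : forall a, linfun (mulmxr (Dm f)) a = maskc f a by move=> a; rewrite lfunE /= maskcE.
have L2 : forall a, linfun (mulmxr (Dm f')) a = maskc f' a by move=> a; rewrite lfunE /= maskcE.
exists (linfun (mulmxr (Dm f)) @: S)%VS, (linfun (mulmxr (Dm f')) @: S)%VS.
split; [|split; [|split]].
- apply/eqP; rewrite eqEsubv; apply/andP; split.
    rewrite subv_add; apply/andP; split; apply/subvP => x /memv_imgP [a Ha ->].
      by rewrite L1; exact: Hs.
    by rewrite L2 Hc; apply: rpredB => //; exact: Hs.
  apply/subvP => a Ha.
  have -> : a = maskc f a + maskc f' a by rewrite Hc addrC subrK.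
  apply: memv_add.
    by rewrite -L1; exact: memv_img.
  by rewrite -L2; exact: memv_img.
- apply/eqP; rewrite -subv0; apply/subvP => x /memv_capP [/memv_imgP [a _ ->] /memv_imgP [b _ E]].
  rewrite memv0; apply/eqP/rowP => i; move: E; rewrite L1 L2 => /rowP /(_ i).
  rewrite !mxE /f' => E.
  case: (F2c (f i)) E => -> E; first by rewrite mul0r.
  by rewrite E F2_11 mul0r.
- move=> x /memv_imgP [a _ ->] i; rewrite L1 mxE inE.
  by case: (F2c (f i)) => ->; rewrite ?mul0r ?eqxx.
- move=> x /memv_imgP [a _ ->] i; rewrite L2 mxE inE /f' inE.
  by case: (F2c (f i)) => ->; rewrite ?F2_11 ?mul0r ?addr0 ?eqxx.
Qed.
End S7.
Section S8.
Variable R : realType.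
Local Notation C := R[i].
Local Notation sgn := (@sgn R).
Local Notation pf := (@pf R _).
Variable n : nat.
Variables A B : {vspace bits n}.
Hypothesis hAB : css_orthogonal A B.
Variable V : 'I_n -> vgate.
Variable Q : 'I_n -> pauli1.
Variable c0 : C.
Local Notation G := (nf_circuit c0 V Q).
Hypothesis hG : logical_operator A B G.

Lemma tensor_sub (g : 'I_n -> 'M[C]_2) (phi phi' : state C n) x :
  tensor g (fun y => phi y - phi' y) x = tensor g phi x - tensor g phi' x.
Proof. by rewrite /tensor -sumrB; apply: eq_bigr => y _; ring. Qed.

Lemma G_sub (phi phi' : state C n) x :
  G (fun y => phi y - phi' y) x = G phi x - G phi' x.
Proof.
rewrite /nf_circuit (tensor_ext _ (fun y => tensor_sub _ phi phi' y)) tensor_sub; ring.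
Qed.

Lemma G_inj (phi phi' : state C n) : (forall x, G phi x = G phi' x) -> forall y, phi y = phi' y.
Proof.
move=> H y; apply/eqP; rewrite -subr_eq0; apply/eqP.
set chi := fun y => phi y - phi' y.
have H0 : forall x, G chi x = 0 by move=> x; rewrite G_sub H subrr.
have := hG.1 chi chi; rewrite /inner (eq_bigr (fun _ => 0)); last by move=> x _; rewrite H0 mulr0.
rewrite big1 // => /esym E.
have := psumr_eq0P _ E; rewrite /= => P.
have : (chi y)^* * chi y = 0 by apply: P => // x _; rewrite -normCKC exprn_ge0.
by rewrite -normCKC => /eqP; rewrite sqrf_eq0 normr_eq0 => /eqP.
Qed.

Lemma G_code psi : codestate A B psi -> codestate A B (G psi).
Proof. exact: hG.2. Qed.

Lemma stabX a : a \in A -> Mx V a 0 \in A /\ Mz V a 0 \in B.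
Proof.
move=> Ha.
have [c2 [Hc2 E]] := @conjG R n V Q c0 1 a 0 (oner_neq0 _).
have := @PEQ R n A B hAB c2 1 (Mx V a 0) (Mz V a 0) 0 0 Hc2.
rewrite !addr0; apply => psi Hpsi x.
apply: (@G_inj (pf c2 (Mx V a 0) (Mz V a 0) psi) (pf 1 0 0 psi)) => y.
rewrite -E.
have -> : pf 1 0 0 psi = psi.
  by apply: functional_extensionality => z; rewrite /pf dot20l sgn0 !mul1r addr0.
have := (G_code Hpsi).1 a Ha y; rewrite gpowX /pf dot20l sgn0 !mul1r //.
Qed.

Lemma stabZ b : b \in B -> Mx V 0 b \in A /\ Mz V 0 b \in B.
Proof.
move=> Hb.
have [c2 [Hc2 E]] := @conjG R n V Q c0 1 0 b (oner_neq0 _).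
have := @PEQ R n A B hAB c2 1 (Mx V 0 b) (Mz V 0 b) 0 0 Hc2.
rewrite !addr0; apply => psi Hpsi x.
apply: (@G_inj (pf c2 (Mx V 0 b) (Mz V 0 b) psi) (pf 1 0 0 psi)) => y.
rewrite -E.
have -> : pf 1 0 0 psi = psi.
  by apply: functional_extensionality => z; rewrite /pf dot20l sgn0 !mul1r addr0.
have := (G_code Hpsi).2 b Hb y; rewrite gpowZ /pf addr0 mul1r //.
Qed.

Lemma logc (P : pauli_data C n) : pc P != 0 ->
  (forall psi, codestate A B psi -> forall x, G (pauli_op P psi) x = pauli_op P (G psi) x) ->
  pu P + Mx V (pu P) (pv P) \in A /\ pv P + Mz V (pu P) (pv P) \in B.
Proof.
move=> HP H.
have [c2 [Hc2 E]] := @conjG R n V Q c0 _ (pu P) (pv P) HP.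
apply: (@PEQ R n A B hAB (pc P) c2) => // psi Hpsi x.
apply: (@G_inj (pf (pc P) (pu P) (pv P) psi) (pf c2 _ _ psi)) => y.
rewrite -E.
have -> : pf (pc P) (pu P) (pv P) psi = pauli_op P psi.
  by apply: functional_extensionality => z; rewrite pauli_opE.
by rewrite (H _ Hpsi) pauli_opE.
Qed.

End S8.
Section S9.
Variable R : realType.
Local Notation C := R[i].
Local Notation sgn := (@sgn R).
Local Notation pf := (@pf R _).
Variable n : nat.
Variables A B : {vspace bits n}.
Hypothesis hAB : css_orthogonal A B.

Lemma pc_neq0 (c : C) : c ^+ 4 = 1 -> c != 0.
Proof. by move=> H; apply/eqP => E; move: H; rewrite E expr0n /= => /eqP; rewrite eq_sym oner_eq0. Qed.

Lemma pauli_opF (P : pauli_data C n) psi : pauli_op P psi = pf (pc P) (pu P) (pv P) psi.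
Proof. by apply: functional_extensionality => x; rewrite pauli_opE. Qed.

Lemma sgn_eqm1 (e : 'F_2) : sgn e = -1 -> e = 1.
Proof.
case: (F2c e) => -> // ; rewrite sgn0 => /eqP; rewrite -subr_eq0 opprK -mulr2n mulrn_eq0 oner_eq0 //.
Qed.

Lemma log_perp (P : pauli_data C n) : pc P != 0 ->
  (forall psi, codestate A B psi -> codestate A B (pauli_op P psi)) ->
  (forall b, b \in B -> dot2 (pu P) b = 0) /\ (forall a, a \in A -> dot2 (pv P) a = 0).
Proof.
move=> Hc H.
have Hphi := H _ (indA_code R hAB).
have Hu : pauli_op P (indA R A) (pu P) = pc P.
  by rewrite pauli_opE /pf /indA addvv mem0v dot20r sgn0 !mulr1.
split => [b Hb | a Ha].
  have := Hphi.2 b Hb (pu P); rewrite gpowZ Hu => E.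
  have : sgn (dot2 b (pu P)) = 1.
    by apply: (mulIf Hc); rewrite E mul1r.
  by move/sgn_eq1; rewrite dot2C.
have := Hphi.1 a Ha (pu P); rewrite gpowX Hu pauli_opE /pf /indA.
rewrite (addrC (pu P) a) addKr2 Ha mulr1 => E.
apply: sgn_eq1; apply: (mulIf Hc); by rewrite mulrC E mul1r.
Qed.

Lemma anti (P P' : pauli_data C n) : pc P != 0 -> pc P' != 0 ->
  (forall psi x, pauli_op P (pauli_op P' psi) x = - pauli_op P' (pauli_op P psi) x) ->
  dot2 (pv P) (pu P') + dot2 (pv P') (pu P) = 1.
Proof.
move=> Hc Hc' H.
have := H (fun _ => 1) 0; rewrite !pauli_opF pf_comm => E.
apply: sgn_eqm1.
set Y := pf _ _ _ _ _ in E.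
have HY : Y != 0 by rewrite /Y pf_ne0 // pf_ne0 // oner_eq0.
by apply: (mulIf HY); rewrite E mulN1r.
Qed.
End S9.
Section S10.
Variable R : realType.
Local Notation C := R[i].
Local Notation sgn := (@sgn R).
Local Notation pf := (@pf R _).
Variables n k p : nat.
Variables A B : {vspace bits n}.
Variables LX LZ : 'I_k -> pauli_data C n.
Variable U : bits p -> bits p -> C.
Variable I : {set p.-tuple 'I_k}.
Variable j : 'I_k.
Hypothesis hj : ~~ covered I j.

Definition Kw (x y : bits k) : C :=
  (\prod_(tau in I) U (restrict x tau) (restrict y tau)) *
  \prod_(l < k | ~~ covered I l) (x 0 l == y 0 l)%:R.

Lemma eqF2v (y s z : bits k) : (y + s == z) = (s == y + z).
Proof.
apply/eqP/eqP => [<-|->]; by rewrite addrA addvv add0r.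
Qed.

Variable alpha : bits k -> bits k -> C.
Hypothesis W1 : forall phi y, addressed_op U I phi y =
   \sum_(s : bits k) \sum_(t : bits k) alpha s t * gpow (Xg C) s (gpow (Zg C) t phi) y.

Lemma star y z : \sum_t alpha (y + z) t * sgn (dot2 t z) = Kw y z.
Proof.
have E := W1 (fun w => (w == z)%:R) y.
have L : addressed_op U I (fun w => (w == z)%:R) y = Kw y z.
  rewrite /addressed_op (bigD1 z) //= eqxx mulr1 [X in _ + X]big1 ?addr0 //.
  by move=> w /negbTE ->; rewrite mulr0.
symmetry; rewrite -L E (bigD1 (y + z)) //= [X in _ + X = _]big1 ?addr0; last first.
  move=> s Hs; apply: big1 => t _; rewrite gpowX gpowZ eqF2v (negbTE Hs) mulr0 mulr0 //.
apply: eq_bigr => t _; rewrite gpowX gpowZ addrA addvv add0r eqxx mulr1 //.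
Qed.

Lemma fourier s t0 : alpha s t0 * Nn R k = \sum_z sgn (dot2 t0 z) * Kw (z + s) z.
Proof.
rewrite (eq_bigr (fun z => \sum_t alpha s t * sgn (dot2 (t0 + t) z))); last first.
  move=> z _; rewrite -star (addrC z s) -addrA addvv addr0 mulr_sumr.
  by apply: eq_bigr => t _; rewrite dot2Dl sgnD; ring.
rewrite exchange_big /= (bigD1 t0) //= [X in _ = _ + X]big1 ?addr0.
  by rewrite -mulr_sumr charsum addvv eqxx mul1r.
move=> t Ht; rewrite -mulr_sumr charsum.
have -> : (t0 + t == 0) = false.
  apply/negbTE; apply: contra Ht => /eqP E; apply/eqP.
  by rewrite -[t]add0r -E -addrA addvv addr0.
by rewrite mul0r mulr0.
Qed.

Definition ej : bits k := delta_mx 0 j.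

Lemma Kw_shift x y : Kw (x + ej) (y + ej) = Kw x y.
Proof.
rewrite /Kw; congr (_ * _).
  apply: eq_bigr => tau Htau.
  have Hr : forall z, restrict (z + ej) tau = restrict z tau.
    move=> z; apply/rowP => l; rewrite !mxE.
    have : tnth tau l != j.
      apply/eqP => E; move: hj; rewrite /covered; apply/negP/negPn/existsP.
      by exists tau; rewrite Htau -E mem_tnth.
    by move/negbTE ->; rewrite andbF addr0.
  by rewrite !Hr.
apply: eq_bigr => l _; rewrite !mxE.
by rewrite (inj_eq (addIr _)).
Qed.

Lemma alpha0 (s t : bits k) : (s 0 j != 0) || (t 0 j != 0) -> alpha s t = 0.
Proof.
move=> Hst; apply: (mulIf (Nn_neq0 R k)); rewrite mul0r fourier.
case Hs: (s 0 j != 0).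
  apply: big1 => z _; rewrite /Kw (bigD1 j) //= mxE.
  have -> : (z 0 j + s 0 j == z 0 j) = false.
    apply/negbTE; apply: contra Hs => /eqP E.
    by apply/eqP; rewrite -[s 0 j]add0r -(F2_aa (z 0 j)) -addrA E F2_aa.
  by rewrite mul0r mulr0 mulr0.
move: Hst; rewrite Hs /= => Ht.
have Ht1 : t 0 j = 1 by case: (F2c (t 0 j)) Ht => ->.
set S := \sum_z _.
have : S = - S.
  rewrite {1}/S (reindex_inj (addIr ej)) /= /S -sumrN.
  apply: eq_bigr => z _.
  rewrite -(addrA z ej s) (addrC ej s) addrA Kw_shift.
  by rewrite dot2Dr /ej dot2_delta Ht1 sgnD sgn1 mulrN1 mulNr.
move/eqP; rewrite -subr_eq0 opprK -mulr2n mulrn_eq0 /=.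
by move/eqP.
Qed.

Lemma lbar_comm (L : 'I_k -> pauli_data C n) (O : op C n) (s : bits k) psi :
  (forall l, s 0 l = 1 -> forall phi, O (pauli_op (L l) phi) = pauli_op (L l) (O phi)) ->
  O (lbar_pow L s psi) = lbar_pow L s (O psi).
Proof.
move=> H; rewrite /lbar_pow; elim: (enum 'I_k) => //= l r IH.
case: ifP => Hl; last exact: IH.
by rewrite H ?IH //; apply/eqP.
Qed.

End S10.
Section S11.
Variable R : realType.
Local Notation C := R[i].
Local Notation sgn := (@sgn R).
Local Notation pf := (@pf R _).
Variables n k : nat.
Variables A B : {vspace bits n}.
Variables LX LZ : 'I_k -> pauli_data C n.
Variable j : 'I_k.
Variable alpha : bits k -> bits k -> C.
Variable G : op C n.
Hypothesis W2 : forall psi, codestate A B psi -> forall x, G psi x =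
        \sum_(s : bits k) \sum_(t : bits k)
            alpha s t * lbar_pow LX s (lbar_pow LZ t psi) x.
Hypothesis hal : forall s t : bits k, (s 0 j != 0) || (t 0 j != 0) -> alpha s t = 0.

Lemma G_comm (P : pauli_data C n) :
  (forall psi, codestate A B psi -> codestate A B (pauli_op P psi)) ->
  (forall l, l != j -> forall phi, pauli_op P (pauli_op (LX l) phi) = pauli_op (LX l) (pauli_op P phi)) ->
  (forall l, l != j -> forall phi, pauli_op P (pauli_op (LZ l) phi) = pauli_op (LZ l) (pauli_op P phi)) ->
  forall psi, codestate A B psi -> forall x, G (pauli_op P psi) x = pauli_op P (G psi) x.
Proof.
move=> Hc HX HZ psi Hpsi x.
have -> : G psi = fun x => \sum_(s : bits k) \sum_(t : bits k)
            alpha s t * lbar_pow LX s (lbar_pow LZ t psi) x.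
  by apply: functional_extensionality => y; rewrite W2.
rewrite (W2 (Hc _ Hpsi)) pauli_opE /pf mulr_sumr; apply: eq_bigr => s _.
rewrite mulr_sumr; apply: eq_bigr => t _.
case Hst: ((s 0 j != 0) || (t 0 j != 0)).
  by rewrite hal // !mul0r mulr0.
move/negbT: Hst; rewrite negb_or !negbK => /andP [/eqP Hs /eqP Ht].
have Hne : forall (u : bits k), u 0 j = 0 -> forall l, u 0 l = 1 -> l != j.
  by move=> u Hu l Hl; apply/eqP => E; move: Hl; rewrite E Hu.
rewrite -(@lbar_comm R n k LZ (pauli_op P) t psi); last first.
  by move=> l Hl phi; rewrite HZ // (Hne t).
rewrite -(@lbar_comm R n k LX (pauli_op P) s); last first.
  by move=> l Hl phi; rewrite HX // (Hne s).
rewrite pauli_opE /pf; ring.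
Qed.
End S11.
Section S12.
Variable R : realType.
Local Notation C := R[i].
Local Notation sgn := (@sgn R).
Local Notation pf := (@pf R _).
Variable n : nat.
Variables A B : {vspace bits n}.
Hypothesis hAB : css_orthogonal A B.
Hypothesis hns : non_splitting A B.
Variable V : 'I_n -> vgate.
Variable Q : 'I_n -> pauli1.
Variable c0 : C.
Local Notation G := (nf_circuit c0 V Q).
Hypothesis hG : logical_operator A B G.

Lemma F2_prod1 (x y : 'F_2) : x * y = 1 -> x = 1 /\ y = 1.
Proof. by case: (F2c x) => ->; case: (F2c y) => ->; rewrite ?mul0r ?mulr0 // => /eqP; rewrite eq_sym oner_eq0. Qed.

Lemma nonsplit_all (f : 'I_n -> 'F_2) i0 : f i0 = 1 ->
  (forall a, a \in A -> maskc f a \in A) -> (forall b, b \in B -> maskc f b \in B) ->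
  forall i, f i = 1.
Proof.
move=> Hi0 HA HB i.
case: (eqVneq [set i | f i == 1] setT) => [E|Hne].
  by apply/eqP; move: (in_setT i); rewrite -E inE.
exfalso; apply: (hns _ Hne); last by split; apply: split_of.
by apply/set0Pn; exists i0; rewrite inE Hi0.
Qed.

Lemma nonsplit_01 (f : 'I_n -> 'F_2) :
  (forall a, a \in A -> maskc f a \in A) -> (forall b, b \in B -> maskc f b \in B) ->
  (forall i, f i = 1) \/ (forall i, f i = 0).
Proof.
move=> HA HB.
case: (eqVneq [set i | f i == 1] setT) => [E|Hne].
  by left => i; apply/eqP; move: (in_setT i); rewrite -E inE.
case: (eqVneq [set i | f i == 1] set0) => [E|Hne0].
  right => i; case: (F2c (f i)) => // Hi; move: (in_set0 i); rewrite -E inE Hi //.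
exfalso; apply: (hns Hne0 Hne); split; exact: split_of.
Qed.

Lemma MxMz_h a : Mx V 0 (Mz V a 0) = maskc (fun i => mzx (V i) * mxz (V i)) a.
Proof. by apply/rowP => i; rewrite !mxE; ring. Qed.
Lemma MzMx_h b : Mz V (Mx V 0 b) 0 = maskc (fun i => mzx (V i) * mxz (V i)) b.
Proof. by apply/rowP => i; rewrite !mxE; ring. Qed.

Lemma hadamard_all i0 : mzx (V i0) * mxz (V i0) = 1 ->
  forall i, mzx (V i) = 1 /\ mxz (V i) = 1.
Proof.
move=> H0 i; apply: F2_prod1; move: i.
apply: (nonsplit_all H0) => [a Ha|b Hb].
  rewrite -MxMz_h; apply: (proj1 (stabZ hAB hG _)); exact: (proj2 (stabX hAB hG Ha)).
rewrite -MzMx_h; apply: (proj2 (stabX hAB hG _)); exact: (proj1 (stabZ hAB hG Hb)).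
Qed.


Section Hall.
Hypothesis Hall : forall i, mzx (V i) = 1 /\ mxz (V i) = 1.

Lemma AB_of a : a \in A -> a \in B.
Proof.
move=> Ha; have := (stabX hAB hG Ha).2.
have -> // : Mz V a 0 = a.
by apply/rowP => i; rewrite !mxE (Hall i).1; ring.
Qed.

Lemma BA_of b : b \in B -> b \in A.
Proof.
move=> Hb; have := (stabZ hAB hG Hb).1.
have -> // : Mx V 0 b = b.
by apply/rowP => i; rewrite !mxE (Hall i).2; ring.
Qed.

Lemma cases3 : (forall i, V i = gPH) \/ (forall i, V i = gHP) \/ (forall i, V i = gH).
Proof.
have MxE : forall a, Mx V a 0 = maskc (fun i => mxx (V i)) a.
  by move=> a; apply/rowP => i; rewrite !mxE; ring.
have MzE : forall b, Mz V 0 b = maskc (fun i => mzz (V i)) b.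
  by move=> b; apply/rowP => i; rewrite !mxE; ring.
have [Hx|Hx] : (forall i, mxx (V i) = 1) \/ (forall i, mxx (V i) = 0).
  apply: nonsplit_01 => [a Ha|b Hb].
    by rewrite -MxE; exact: (stabX hAB hG Ha).1.
  by apply: AB_of; rewrite -MxE; exact: (stabX hAB hG (BA_of Hb)).1.
  left => i; have := Hall i; have := Hx i; case: (V i) => //= _ [] //.
have [Hz|Hz] : (forall i, mzz (V i) = 1) \/ (forall i, mzz (V i) = 0).
  apply: nonsplit_01 => [a Ha|b Hb].
    by apply: BA_of; rewrite -MzE; exact: (stabZ hAB hG (AB_of Ha)).2.
  by rewrite -MzE; exact: (stabZ hAB hG Hb).2.
  right; left => i; have := Hall i; have := Hx i; have := Hz i; case: (V i) => //= _ _ [] //.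
right; right => i; have := Hall i; have := Hx i; have := Hz i; case: (V i) => //= _ _ [] //.
Qed.


Lemma final_contra (u v u' v' : bits n) :
  (forall b, b \in B -> dot2 u b = 0) -> (forall a, a \in A -> dot2 v a = 0) ->
  (forall b, b \in B -> dot2 u' b = 0) -> (forall a, a \in A -> dot2 v' a = 0) ->
  u + Mx V u v \in A -> v + Mz V u v \in B -> u' + Mx V u' v' \in A ->
  dot2 v u' + dot2 v' u = 1 -> False.
Proof.
move=> Pu Pv Pu' Pv' F1 F2 F3 Hanti.
have K1 : forall x y : bits n, x + (x + y) = y by move=> x y; rewrite addrA addvv add0r.
have K2 : forall x y : bits n, x + y + y = x by move=> x y; rewrite -addrA addvv addr0.
suff [Hv Hu] : v \in B /\ u \in A.
  by move: Hanti; rewrite (dot2C v) Pu' // Pv' // addr0 => /eqP; rewrite eq_sym oner_eq0.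
case: cases3 => [HV|[HV|HV]].
- have MX : Mx V u v = u + v by apply/rowP => i; rewrite !mxE HV /=; ring.
  have MZ : Mz V u v = u by apply/rowP => i; rewrite !mxE HV /=; ring.
  rewrite MX K1 in F1; rewrite MZ in F2.
  have HvB := AB_of F1.
  split=> //; apply: BA_of; rewrite -(K2 u v) (addrC u v); exact: rpredD.
- have MX : Mx V u v = v by apply/rowP => i; rewrite !mxE HV /=; ring.
  have MZ : Mz V u v = u + v by apply/rowP => i; rewrite !mxE HV /=; ring.
  rewrite MX in F1; rewrite MZ (addrC u v) K1 in F2.
  have HuA := BA_of F2.
  have HvA : v \in A by rewrite -(K1 u v); exact: rpredD.
  by split=> //; apply: AB_of.
- exfalso.
  have MX : forall x y, Mx V x y = y by move=> x y; apply/rowP => i; rewrite !mxE HV /=; ring.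
  rewrite !MX in F1 F3.
  move: Hanti.
  rewrite (dot2C v) -{1}(K1 u v) dot2Dr (Pu' _ (AB_of F1)) addr0.
  rewrite (dot2C v') -{1}(K1 u' v') dot2Dr (Pu _ (AB_of F3)) addr0.
  by rewrite dot2C F2_aa => /eqP; rewrite eq_sym oner_eq0.
Qed.
End Hall.
End S12.
Theorem proposition8 (R : realType) (n k p : nat)
  (A B : {vspace 'rV['F_2]_n})
  (hAB : css_orthogonal A B) (hns : non_splitting A B)
  (hk : k = (n - \dim A - \dim B)%N)
  (LX LZ : 'I_k -> pauli_data R[i] n) (hL : valid_logicals A B LX LZ)
  (hp : (0 < p)%N) (U : bits p -> bits p -> R[i]) (hU : unitary_ker U)
  (hPA : partially_addressable A B LX LZ U) :
  forall (I : {set p.-tuple 'I_k}) (c : R[i]) (V : 'I_n -> vgate)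
         (Q : 'I_n -> pauli1),
    c^* * c = 1 ->
    realizes_addressing A B LX LZ U I (nf_circuit c V Q) ->
    forall i : 'I_n, V i <> gH /\ V i <> gPH /\ V i <> gHP.
Proof.
move=> I c V Q hc [hval [hlog [alpha [W1 W2]]]] i0.
suff Hh : ~ (mzx (V i0) * mxz (V i0) = 1).
  case E: (V i0) Hh => /= Hh; (try by (split; [|split]; discriminate));
    exfalso; apply: Hh; by rewrite mulr1.
move=> Hh0.
have Hall := hadamard_all hAB hns hlog Hh0.
have [j hj] := hval.2.2.2.
have hal := alpha0 hj W1.
move: hL; rewrite /valid_logicals /= => -[H4 [Hlogs [Hinv [Hanti Hcomm]]]].
have hpcX : pc (LX j) != 0 by apply: pc_neq0; exact: (H4 j).1.
have hpcZ : pc (LZ j) != 0 by apply: pc_neq0; exact: (H4 j).2.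
have ne : forall l, l != j -> j != l by move=> l; rewrite eq_sym.
have GcX := G_comm W2 hal (Hlogs j).1.2
  (fun l Hl phi => functional_extensionality _ _ (fun x => ((Hcomm j l (ne l Hl)) phi x).1))
  (fun l Hl phi => functional_extensionality _ _ (fun x => ((Hcomm j l (ne l Hl)) phi x).2.2)).
have GcZ := G_comm W2 hal (Hlogs j).2.2
  (fun l Hl phi => functional_extensionality _ _ (fun x => esym ((Hcomm l j Hl) phi x).2.2))
  (fun l Hl phi => functional_extensionality _ _ (fun x => ((Hcomm j l (ne l Hl)) phi x).2.1)).
have [FX1 FX2] := logc hAB hlog hpcX GcX.
have [FZ1 FZ2] := logc hAB hlog hpcZ GcZ.
have [PuX PvX] := log_perp hAB hpcX (Hlogs j).1.2.
have [PuZ PvZ] := log_perp hAB hpcZ (Hlogs j).2.2.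
have Ha := anti hpcX hpcZ (Hanti j).
exact: (final_contra hAB hns hlog Hall PuX PvX PuZ PvZ FX1 FX2 FZ1 Ha).
Qed.
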